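(* Let $r$ be a Hermitian symmetric polynomial in one complex variable with $r(z,\overline z)>0$ for all $z\in\mathbb{C}$ but $\inf_{z\in\mathbb{C}}r(z,\overline z)=0$. Then $r\notin\mathcal{Q}'(1)$.
   Context: $\mathcal{Q}'(1)$: Hermitian symmetric polynomials $r$ in one variable with $r(z,\overline z)\ge0$ for all $z$ for which there exist a Hermitian symmetric polynomial $s\ge0$, not identically $0$, and a holomorphic polynomial mapping $F$ with $rs=\|F\|^2$. *)

(* Defs.v *)
From HB Require Import structures.
From mathcomp Require Import all_boot all_order all_algebra.
From mathcomp Require Import complex.
From mathcomp Require Import reals.
Set Implicit Arguments. Unset Strict Implicit. Unset Printing Implicit Defensive.
Import Order.TTheory GRing.Theory Num.Theory.
Local Open Scope ring_scope.

(* A polynomial in two complex variables (z, w) is represented as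
   r : {poly {poly C}}, where the coefficient of z^a w^b is (r`_a)`_b.
   The Hermitian symmetric polynomial r(z, wbar) is evaluated at (z, wbar). *)
Definition beval (C : comNzRingType) (r : {poly {poly C}}) (z w : C) : C :=
  (map_poly (fun q : {poly C} => q.[w]) r).[z].

Section HermDefs.
Variable R : realType.
Local Notation C := (R[i]).

Definition herm_sym (r : {poly {poly C}}) : Prop :=
  forall a b : nat, (r`_a)`_b = ((r`_b)`_a)^*.

Definition hdiag (r : {poly {poly C}}) (z : C) : C := beval r z z^*.

Definition sqnorm (F : seq {poly C}) (z : C) : C :=
  \sum_(f <- F) `|f.[z]| ^+ 2.

Definition Qprime1 (r : {poly {poly C}}) : Prop :=
  herm_sym r /\ (forall z : C, 0 <= hdiag r z) /\
  exists (s : {poly {poly C}}) (F : seq {poly C}),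
    [/\ herm_sym s, (forall z : C, 0 <= hdiag s z), s != 0 &
        forall z : C, hdiag r z * hdiag s z = sqnorm F z].
End HermDefs.

(* Main.v *)
Require Import Defs.
From HB Require Import structures.
From mathcomp Require Import all_boot all_order all_algebra.
From mathcomp Require Import complex.
From mathcomp Require Import reals.
From mathcomp Require Import all_classical topology normedtype derive.
From mathcomp Require Import zify ring lra.
Import Order.TTheory GRing.Theory Num.Theory.
Import numFieldNormedType.Exports.
Local Open Scope ring_scope.

Section Cont.
Variable R : realType.
Local Notation C := R[i].
Local Notation Re := (@complex.Re R).
Local Notation Im := (@complex.Im R).

Definition cc (g : R * R -> C) :=
  continuous (fun p : R * R => Re (g p)) /\ continuous (fun p : R * R => Im (g p)).

Lemma cc_cst (c : C) : cc (fun _ => c).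
Proof. by split; apply: cst_continuous. Qed.

Lemma ReM (x y : C) : Re (x * y) = Re x * Re y - Im x * Im y.
Proof. by case: x y => [? ?] [? ?]. Qed.
Lemma ImM (x y : C) : Im (x * y) = Re x * Im y + Im x * Re y.
Proof. by case: x y => [? ?] [? ?]. Qed.
Lemma ReD (x y : C) : Re (x + y) = Re x + Re y.
Proof. by case: x y => [? ?] [? ?]. Qed.
Lemma ImD (x y : C) : Im (x + y) = Im x + Im y.
Proof. by case: x y => [? ?] [? ?]. Qed.

Lemma cc_add f g : cc f -> cc g -> cc (fun p => f p + g p).
Proof.
move=> [f1 f2] [g1 g2]; split => p /=.
  rewrite (_ : (fun q => Re (f q + g q)) = (fun q => Re (f q) + Re (g q))).
    exact: continuousD (f1 p) (g1 p).
  by apply/funext => q; rewrite ReD.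
rewrite (_ : (fun q => Im (f q + g q)) = (fun q => Im (f q) + Im (g q))).
  exact: continuousD (f2 p) (g2 p).
by apply/funext => q; rewrite ImD.
Qed.

Lemma cc_mul f g : cc f -> cc g -> cc (fun p => f p * g p).
Proof.
move=> [f1 f2] [g1 g2]; split => p /=.
  rewrite (_ : (fun q => Re (f q * g q)) = (fun q => Re (f q) * Re (g q) - Im (f q) * Im (g q))).
    exact: continuousB (continuousM (f1 p) (g1 p)) (continuousM (f2 p) (g2 p)).
  by apply/funext => q; rewrite ReM.
rewrite (_ : (fun q => Im (f q * g q)) = (fun q => Re (f q) * Im (g q) + Im (f q) * Re (g q))).
  exact: continuousD (continuousM (f1 p) (g2 p)) (continuousM (f2 p) (g1 p)).
by apply/funext => q; rewrite ImM.
Qed.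

Lemma cc_sum (I : Type) (s : seq I) (P : pred I) (F : I -> R * R -> C) :
  (forall i, cc (F i)) -> cc (fun p => \sum_(i <- s | P i) F i p).
Proof.
move=> H; elim: s => [|i s IH].
  rewrite (_ : (fun p => _) = fun _ => 0); first exact: cc_cst.
  by apply/funext => p; rewrite big_nil.
case: (boolP (P i)) => Pi.
  rewrite (_ : (fun p => _) = fun p => F i p + \sum_(j <- s | P j) F j p).
    exact: cc_add.
  by apply/funext => p; rewrite big_cons Pi.
rewrite (_ : (fun p => _) = fun p => \sum_(j <- s | P j) F j p) //.
by apply/funext => p; rewrite big_cons (negbTE Pi).
Qed.

Lemma cc_exp f n : cc f -> cc (fun p => f p ^+ n).
Proof.
move=> H; elim: n => [|n IH].
  rewrite (_ : (fun p => _) = fun _ => 1); first exact: cc_cst.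
  by apply/funext => p; rewrite expr0.
rewrite (_ : (fun p => _) = fun p => f p * f p ^+ n); first exact: cc_mul.
by apply/funext => p; rewrite exprS.
Qed.

Lemma cc_z : cc (fun p => Complex p.1 p.2).
Proof.
split => p /=; first exact: cvg_fst.
exact: cvg_snd.
Qed.

Lemma cc_zc : cc (fun p => (Complex p.1 p.2)^*).
Proof.
split => p /=; first exact: cvg_fst.
by apply: continuousN; exact: cvg_snd.
Qed.

Lemma near_field (g : C -> C) (T : R) : 0 <= T ->
  cc (fun p => g (Complex p.1 p.2)) -> (forall z, 0 < g z) ->
  exists2 mu : R, 0 < mu & forall z, `|z| <= T%:C%C -> mu%:C%C <= g z.
Proof.
move=> T0 [gc _] gpos.
pose A := (`[- T, T]%classic `*` `[- T, T]%classic)%classic.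
have A0 : (A !=set0)%classic.
  by exists (0, 0); rewrite /A /= !in_itv /= oppr_le0 T0.
have cA : compact A by apply: compact_setX; apply: segment_compact.
have cf : {within A, continuous (fun p : R * R => Re (g (Complex p.1 p.2)))}%classic.
  exact: continuous_subspaceT.
have [c cA' cmin] := compact_EVT_min A0 cA cf.
exists (Re (g (Complex c.1 c.2))).
  by have := gpos (Complex c.1 c.2); rewrite ltcE => /andP[].
move=> z zT.
have zA : (Re z, Im z) \in A.
  rewrite inE /A /= !in_itv /= -!ler_norml.
  have := normc_ge_Re z; have := normc_ge_Re (z * 'i%C).
  rewrite ReiNIm normrN normrM normCi mulr1 => h1 h2.
  by split; rewrite -lecR; [apply: le_trans h2 zT | apply: le_trans h1 zT].
have := cmin _ zA => /=; rewrite -lecR => h.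
apply: le_trans h _.
have := gpos (Re z +i* Im z)%C; rewrite ltcE /= => /andP[/eqP Him _].
case: z {zT zA} Him => a b /= Him.
by rewrite lecE /= Him eqxx lexx.
Qed.

Lemma cc_fst : continuous (fun p : R * R => p.1).
Proof. by move=> p; apply: cvg_fst. Qed.
Lemma cc_snd : continuous (fun p : R * R => p.2).
Proof. by move=> p; apply: cvg_snd. Qed.

Lemma hdiag_sum (r : {poly {poly C}}) z N : (size r <= N)%N -> (forall a : nat, leq (size r`_a) N) ->
  hdiag r z = \sum_(a < N) \sum_(b < N) (r`_a)`_b * z ^+ a * (z^*) ^+ b.
Proof.
move=> sr sra; rewrite /hdiag /beval (horner_coef_wide _ (leq_trans (size_poly _ _) sr)).
apply: eq_bigr => a _; rewrite coef_poly; case: ltnP => ha; last first.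
  by rewrite nth_default // mul0r big1 // => b _; rewrite coef0 !mul0r.
rewrite (horner_coef_wide _ (sra a)).
rewrite mulr_suml; apply: eq_bigr => b _; rewrite -!mulrA; congr (_ * _); exact: mulrC.
Qed.

Definition Ru (r : {poly {poly C}}) (u : C) N : {poly C} :=
  \sum_(a < N) \sum_(b < N) ((r`_a)`_b * u ^+ a * (u^*) ^+ b) *: 'X^(a + b).

Lemma Ru_eval r u N t : t^* = t ->
  (Ru r u N).[t] = \sum_(a < N) \sum_(b < N) (r`_a)`_b * (t * u) ^+ a * ((t * u)^*) ^+ b.
Proof.
move=> tr; rewrite /Ru horner_sum; apply: eq_bigr => a _.
rewrite horner_sum; apply: eq_bigr => b _.
rewrite hornerZ hornerXn rmorphM /= tr !exprMn exprD; ring.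
Qed.

Lemma Ru_coef r u N k : (Ru r u N)`_k =
  \sum_(a < N) \sum_(b < N) ((r`_a)`_b * u ^+ a * (u^*) ^+ b) * (k == (a + b)%N)%:R.
Proof.
rewrite /Ru coef_sum; apply: eq_bigr => a _; rewrite coef_sum; apply: eq_bigr => b _.
by rewrite coefZ coefXn.
Qed.

Lemma Ru_coef_bound r u N k : `|u| = 1 ->
  `|(Ru r u N)`_k| <= \sum_(a < N) \sum_(b < N) `|(r`_a)`_b|.
Proof.
move=> u1; rewrite Ru_coef; apply: le_trans (ler_norm_sum _ _ _) _.
apply: ler_sum => a _; apply: le_trans (ler_norm_sum _ _ _) _.
apply: ler_sum => b _; rewrite !normrM !normrX norm_conjC u1 !expr1n !mulr1.
by case: (k == _); rewrite ?normr1 ?normr0 ?mulr1 ?mulr0.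
Qed.

Lemma Ru_size r u N : (size (Ru r u N) <= N + N)%N.
Proof.
rewrite /Ru; apply: (big_ind (fun p : {poly C} => (size p <= N + N)%N)) => //.
- by rewrite size_poly0.
- by move=> p q hp hq; apply: leq_trans (size_polyD _ _) _; rewrite geq_max hp hq.
move=> a _; apply: (big_ind (fun p : {poly C} => (size p <= N + N)%N)) => //.
- by rewrite size_poly0.
- by move=> p q hp hq; apply: leq_trans (size_polyD _ _) _; rewrite geq_max hp hq.
move=> b _; apply: leq_trans (size_scale_leq _ _) _.
rewrite size_polyXn; have := ltn_ord a; have := ltn_ord b; lia.
Qed.

Lemma poly_nat_eq (P Q : {poly C}) : (forall n : nat, P.[n%:R] = Q.[n%:R]) -> P = Q.
Proof.
move=> h; apply/eqP; rewrite -subr_eq0; apply/negPn/negP => nz.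
set rs := [seq (n%:R : C) | n <- iota 0 (size (P - Q))].
have H1 : all (root (P - Q)) rs.
  by apply/allP => x /mapP[n _ ->]; rewrite /root hornerD hornerN h subrr.
have H2 : uniq rs.
  rewrite map_inj_uniq ?iota_uniq //.
  by move=> m n /eqP; rewrite eqr_nat => /eqP.
by have := max_poly_roots nz H1 H2; rewrite size_map size_iota ltnn.
Qed.

Lemma lower_bound (P : {poly C}) (m G t : C) (L : nat) :
  0 < m -> m <= `|lead_coef P| -> (forall k, `|P`_k| <= G) -> (size P <= L)%N ->
  1 <= t -> m + L%:R * G <= m * t -> m <= `|P.[t]|.
Proof.
move=> m0 mle cG sL t1 key.
have G0 : 0 <= G := le_trans (normr_ge0 _) (cG 0%N).
have t0 : 0 <= t := le_trans ler01 t1.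
have Pn0 : P != 0.
  apply/negP => /eqP P0; move: mle; rewrite P0 lead_coef0 normr0.
  by move/(lt_le_trans m0); rewrite ltxx.
have : (0 < size P)%N by rewrite size_poly_gt0.
rewrite horner_coef; move: mle; rewrite lead_coefE.
case sP: (size P) => [//|p] /= mle _; rewrite big_ord_recr /=.
case: p sP mle => [|q] sP mle.
  by rewrite big_ord0 add0r expr0 mulr1.
have tq1 : 1 <= t ^+ q := exprn_ege1 q t1.
have hs : `|\sum_(i < q.+1) P`_i * t ^+ i| <= L%:R * G * t ^+ q.
  apply: le_trans (ler_norm_sum _ _ _) _.
  apply: le_trans (_ : \sum_(i < q.+1) G * t ^+ q <= _).
    apply: ler_sum => i _; rewrite normrM (ger0_norm (exprn_ge0 _ t0)).
    apply: ler_pM => //; first exact: exprn_ge0.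
    by apply: ler_weXn2l => //; rewrite -ltnS.
  rewrite sumr_const card_ord -mulrnAl; apply: ler_wpM2r; first exact: exprn_ge0.
  rewrite -[G *+ _]mulr_natl; apply: ler_wpM2r => //; rewrite ler_nat; lia.
have hl : m * t ^+ q.+1 <= `|P`_q.+1 * t ^+ q.+1|.
  rewrite normrM (ger0_norm (exprn_ge0 _ t0)); apply: ler_wpM2r => //.
  exact: exprn_ge0.
rewrite addrC; apply: le_trans (lerB_normD _ _).
apply: le_trans (_ : m * t ^+ q.+1 - L%:R * G * t ^+ q <= _); last first.
  exact: lerB.
apply: le_trans (_ : m * t ^+ q <= _).
  by rewrite ler_peMr // ltW.
rewrite -subr_ge0 (_ : _ - _ = (m * t - (m + L%:R * G)) * t ^+ q); last first.
  by rewrite exprS; ring.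
by apply: mulr_ge0; [rewrite subr_ge0 | exact: exprn_ge0].
Qed.

Definition Pf (f : {poly C}) (u : C) : {poly C} := \poly_(i < size f) (f`_i * u ^+ i).
Definition Qf (f : {poly C}) (u : C) : {poly C} :=
  \poly_(i < size f) ((f`_i)^* * (u^*) ^+ i).
Definition Nu (F : seq {poly C}) (u : C) : {poly C} := \sum_(f <- F) Pf f u * Qf f u.

Lemma Nu_eval F u t : t^* = t -> (Nu F u).[t] = sqnorm F (t * u).
Proof.
move=> tr; rewrite /Nu /sqnorm horner_sum; apply: eq_bigr => f _.
rewrite hornerM !horner_poly normCK horner_coef rmorph_sum /=; congr (_ * _).
  by apply: eq_bigr => i _; rewrite exprMn; ring.
apply: eq_bigr => i _; rewrite rmorphM rmorphXn rmorphM /= tr exprMn; ring.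
Qed.

Lemma coefM_top (p q : {poly C}) n : (size p <= n.+1)%N -> (size q <= n.+1)%N ->
  (p * q)`_(n + n) = p`_n * q`_n.
Proof.
move=> sp sq; rewrite coefM (bigD1 (Ordinal (leq_addr n n.+1))) //= addnK.
rewrite big1 ?addr0 // => j /eqP nj.
have [hj|hj] := ltnP n j.
  by rewrite (nth_default 0 (leq_trans sp hj)) mul0r.
have : j != n :> nat by apply/eqP => e; apply: nj; apply: val_inj.
move=> jn; have hj' : (n < n + n - j)%N by lia.
by rewrite (nth_default 0 (leq_trans sq hj')) mulr0.
Qed.

Lemma Pf_coef f u i : (Pf f u)`_i = f`_i * u ^+ i.
Proof.
rewrite coef_poly; case: ltnP => // h; by rewrite nth_default // mul0r.
Qed.

Lemma Qf_coef f u i : (Qf f u)`_i = (f`_i)^* * (u^*) ^+ i.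
Proof.
rewrite coef_poly; case: ltnP => // h; by rewrite nth_default // conjC0 mul0r.
Qed.

Lemma Nu_size (F : seq {poly C}) u n : (forall f, f \in F -> size f <= n.+1)%N ->
  (size (Nu F u) <= (n + n).+1)%N.
Proof.
rewrite /Nu => hF; rewrite big_seq.
apply: (big_ind (fun p : {poly C} => (size p <= (n + n).+1)%N)) => //.
- by rewrite size_poly0.
- by move=> p q hp hq; apply: leq_trans (size_polyD _ _) _; rewrite geq_max hp hq.
move=> f /hF hf; apply: leq_trans (size_polyMleq _ _) _.
have h1 : (size (Pf f u) <= n.+1)%N := leq_trans (size_poly _ _) hf.
have h2 : (size (Qf f u) <= n.+1)%N := leq_trans (size_poly _ _) hf.
lia.
Qed.

Lemma Nu_top (F : seq {poly C}) u n : `|u| = 1 -> (forall f, f \in F -> size f <= n.+1)%N ->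
  (Nu F u)`_(n + n) = \sum_(f <- F) `|f`_n| ^+ 2.
Proof.
move=> u1 hF; rewrite /Nu coef_sum !big_seq; apply: eq_bigr => f /hF hf.
rewrite coefM_top ?Pf_coef ?Qf_coef; last 2 first.
- exact: leq_trans (size_poly _ _) hf.
- exact: leq_trans (size_poly _ _) hf.
have uu : u ^+ n * u^* ^+ n = 1 by rewrite -exprMn -normCK u1 !expr1n.
rewrite normCK; transitivity (f`_n * (f`_n)^* * (u ^+ n * u^* ^+ n)); first by ring.
by rewrite uu mulr1.
Qed.

Lemma hdiag_Ru (r : {poly {poly C}}) N u t :
  (size r <= N)%N -> (forall a : nat, leq (size r`_a) N) -> t^* = t ->
  hdiag r (t * u) = (Ru r u N).[t].
Proof. by move=> h1 h2 tr; rewrite Ru_eval // (hdiag_sum _ _ _ h1 h2). Qed.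

Lemma coef_size (p : {poly C}) i : p`_i != 0 -> (i < size p)%N.
Proof. by apply: contraR; rewrite -leqNgt => h; rewrite nth_default. Qed.

Lemma far_field (r s : {poly {poly C}}) (F : seq {poly C}) N n :
  (size r <= N)%N -> (forall a : nat, leq (size r`_a) N) ->
  (size s <= N)%N -> (forall a : nat, leq (size s`_a) N) ->
  (forall z, hdiag r z * hdiag s z = sqnorm F z) ->
  (forall z, 0 < hdiag r z) ->
  (forall f, f \in F -> size f <= n.+1)%N ->
  0 < \sum_(f <- F) `|f`_n| ^+ 2 ->
  exists2 m : C, 0 < m & exists2 T : C, 1 <= T &
    forall z, T <= `|z| -> m <= hdiag r z.
Proof.
move=> hr1 hr2 hs1 hs2 hid rpos hF cpos.
set c := \sum_(f <- F) `|f`_n| ^+ 2 in cpos.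
set Gr := \sum_(a < N) \sum_(b < N) `|(r`_a)`_b|.
set Gs := \sum_(a < N) \sum_(b < N) `|(s`_a)`_b|.
have key : forall u, `|u| = 1 ->
    lead_coef (Ru r u N) * lead_coef (Ru s u N) = c.
  move=> u u1.
  have prod : Ru r u N * Ru s u N = Nu F u.
    apply: poly_nat_eq => k; have kr : (k%:R : C)^* = k%:R by rewrite rmorph_nat.
    by rewrite hornerM Nu_eval // -(hdiag_Ru _ _ _ _ hr1 hr2 kr) -(hdiag_Ru _ _ _ _ hs1 hs2 kr).
  have Nc : (Nu F u)`_(n + n) = c by rewrite Nu_top.
  have sN : size (Nu F u) = (n + n).+1.
    apply/eqP; rewrite eqn_leq Nu_size //; apply: coef_size.
    by rewrite Nc; apply/eqP => e; move: cpos; rewrite e ltxx.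
  by rewrite -lead_coefM prod lead_coefE sN.
have Gs0 : 0 < Gs.
  have := key 1 (normr1 _).
  have := Ru_coef_bound s 1 N ((size (Ru s 1 N)).-1) (normr1 _).
  rewrite -lead_coefE => hb hk.
  apply: lt_le_trans hb; rewrite normr_gt0; apply/eqP => e.
  by move: hk; rewrite e mulr0 => e'; move: cpos; rewrite -e' ltxx.
have Gr0 : 0 <= Gr.
  by apply: sumr_ge0 => a _; apply: sumr_ge0 => b _; exact: normr_ge0.
set m := c / Gs.
have m0 : 0 < m by apply: divr_gt0.
exists m => //.
exists (1 + (N + N)%:R * Gr / m).
  by rewrite lerDl; apply: divr_ge0; [apply: mulr_ge0 | exact: ltW].
move=> z zT.
have t1 : 1 <= `|z|.
  apply: le_trans zT; rewrite lerDl; apply: divr_ge0; [apply: mulr_ge0 | exact: ltW] => //.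
have tn0 : `|z| != 0 by apply/eqP => e; move: t1; rewrite e ler10.
set u := z / `|z|.
have u1 : `|u| = 1 by rewrite /u normrM normfV normr_id mulfV.
have zE : z = `|z| * u by rewrite /u mulrC divfK.
have hrz : hdiag r z = (Ru r u N).[`|z|] by rewrite {1}zE (hdiag_Ru _ _ _ _ hr1 hr2 (conj_normC z)).
rewrite -(ger0_norm (ltW (rpos z))) hrz.
apply: (@lower_bound _ m Gr _ (N + N)%N) => //.
- have := key u u1.
  have hb := Ru_coef_bound s u N ((size (Ru s u N)).-1) u1.
  rewrite -lead_coefE in hb => hk.
  rewrite /m ler_pdivrMr // -(ger0_norm (ltW cpos)) -hk normrM; apply: ler_wpM2l => //; exact: normr_ge0.
- by move=> k; apply: Ru_coef_bound.
- exact: Ru_size.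
- apply: le_trans (ler_wpM2l (ltW m0) zT).
  by rewrite mulrDr mulr1 lerD2l mulrCA mulfV ?mulr1 // lt0r_neq0.
Qed.

Lemma poly_inf_eq (x : nat -> C) (P Q : {poly C}) : injective x ->
  (forall n : nat, P.[x n] = Q.[x n]) -> P = Q.
Proof.
move=> xi h; apply/eqP; rewrite -subr_eq0; apply/negPn/negP => nz.
set rs := [seq x n | n <- iota 0 (size (P - Q))].
have H1 : all (root (P - Q)) rs.
  by apply/allP => y /mapP[n _ ->]; rewrite /root hornerD hornerN h subrr.
have H2 : uniq rs by rewrite map_inj_uniq ?iota_uniq.
by have := max_poly_roots nz H1 H2; rewrite size_map size_iota ltnn.
Qed.

Definition wj (j : nat) : C := Complex 1 j%:R.
Definition uj (j : nat) : C := wj j / (wj j)^*.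

Lemma wj_neq0 j : wj j != 0.
Proof. by apply/eqP => /(congr1 (@complex.Re R)) /= /eqP; rewrite oner_eq0. Qed.

Lemma uj_norm j : `|uj j| = 1.
Proof.
rewrite /uj normrM normfV norm_conjC mulfV // normr_eq0; exact: wj_neq0.
Qed.

Lemma uj_inj : injective uj.
Proof.
move=> j k; rewrite /uj => e.
have c0 : forall l, (wj l)^* != 0 by move=> l; rewrite conjC_eq0 wj_neq0.
have : wj j * (wj k)^* = wj k * (wj j)^*.
  have := congr1 (fun x => x * (wj j)^* * (wj k)^*) e => /=.
  by rewrite divfK // mulrAC divfK.
move=> /(congr1 (@complex.Im R)) /=; rewrite !mul1r !mulr1 => h.
have : (j%:R : R) = k%:R by lra.
by move/eqP; rewrite eqr_nat => /eqP.
Qed.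

Definition Hk (s : {poly {poly C}}) N k : {poly C} :=
  \sum_(a < N) \sum_(b < N) ((s`_a)`_b * (k == (a + b)%N)%:R) *: 'X^(a + a).

Lemma Hk_eval s N k u : u * u^* = 1 -> (Hk s N k).[u] = u ^+ k * (Ru s u N)`_k.
Proof.
move=> uu; rewrite Ru_coef /Hk horner_sum mulr_sumr; apply: eq_bigr => a _.
rewrite horner_sum mulr_sumr; apply: eq_bigr => b _.
rewrite hornerZ hornerXn; case: eqP => [->|_]; last by rewrite !mulr0 mul0r.
rewrite !mulr1.
transitivity ((s`_a)`_b * u ^+ (a + a) * (u * u^*) ^+ b); last first.
  by rewrite exprMn !exprD; ring.
by rewrite uu expr1n mulr1; ring.
Qed.

Lemma Hk_coef s N k i : (Hk s N k)`_i =
  \sum_(a < N) \sum_(b < N) ((s`_a)`_b * (k == (a + b)%N)%:R) * (i == (a + a)%N)%:R.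
Proof.
rewrite /Hk coef_sum; apply: eq_bigr => a _; rewrite coef_sum; apply: eq_bigr => b _.
by rewrite coefZ coefXn.
Qed.

Lemma polar (s : {poly {poly C}}) N :
  (size s <= N)%N -> (forall a : nat, leq (size s`_a) N) ->
  (forall z, hdiag s z = 0) -> s = 0.
Proof.
move=> h1 h2 hz.
have Ru0 : forall u, Ru s u N = 0.
  move=> u; apply: poly_nat_eq => k.
  have kr : (k%:R : C)^* = k%:R by rewrite rmorph_nat.
  by rewrite horner0 -(hdiag_Ru _ _ _ _ h1 h2 kr) hz.
have H0 : forall k, Hk s N k = 0.
  move=> k; apply: (@poly_inf_eq uj _ _ uj_inj) => j.
  rewrite horner0 Hk_eval ?Ru0 ?coef0 ?mulr0 //.
  by rewrite -normCK uj_norm expr1n.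
have cab : forall a b, (a < N)%N -> (b < N)%N -> (s`_a)`_b = 0.
  move=> a b ha hb; have e := congr1 (fun p : {poly C} => p`_(a + a)) (H0 (a + b)%N).
  rewrite /= coef0 Hk_coef (bigD1 (Ordinal ha)) //= in e.
  rewrite [X in _ + X]big1 ?addr0 in e; last first.
    move=> a' na'; rewrite big1 // => b' _.
    have : (a + a)%N != (a' + a')%N.
      apply/eqP => e'; move/eqP: na'; apply; apply: val_inj => /=; lia.
    by move/negbTE ->; rewrite mulr0.
  rewrite (bigD1 (Ordinal hb)) //= [X in _ + X]big1 ?addr0 in e; last first.
    move=> b' nb'; have : (a + b)%N != (a + b')%N.
      apply/eqP => e'; move/eqP: nb'; apply; apply: val_inj => /=; lia.
    by move/negbTE ->; rewrite mulr0 mul0r.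
  by move: e; rewrite !eqxx !mulr1.
apply/polyP => a; rewrite coef0; case: (ltnP a N) => ha; last first.
  by rewrite nth_default // (leq_trans h1 ha).
apply/polyP => b; rewrite coef0; case: (ltnP b N) => hb; first exact: cab.
by rewrite nth_default // (leq_trans (h2 a) hb).
Qed.


Lemma max_attained (F : seq {poly C}) : (0 < \max_(f <- F) size f)%N ->
  exists2 f, f \in F & size f = \max_(f <- F) size f.
Proof.
elim: F => [|g F IH]; rewrite ?big_nil // big_cons => h.
case: (leqP (\max_(f <- F) size f) (size g)) => hg.
  by exists g; rewrite ?mem_head // (maxn_idPl hg).
have [f fF sf] := IH (leq_ltn_trans (leq0n _) hg).
by exists f; rewrite ?inE ?fF ?orbT // (maxn_idPr (ltnW hg)).
Qed.

Lemma Nb_ok (p : {poly {poly C}}) a :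
  leq (size (p`_a)%R) (maxn (size p) (\max_(b < size p) size (p`_b)%R)).
Proof.
case: (ltnP a (size p)) => ha.
  by apply: leq_trans (leq_maxr _ _); apply: (leq_bigmax (Ordinal ha)).
by rewrite nth_default // size_poly0.
Qed.

Lemma C_real (x : C) : 0 <= x -> x = (complex.Re x)%:C%C.
Proof. by case: x => a b; rewrite lecE => /andP[/eqP /= -> _]. Qed.

Lemma cc_hdiag (r : {poly {poly C}}) : cc (fun p => hdiag r (Complex p.1 p.2)).
Proof.
set N := maxn (size r) (\max_(b < size r) size (r`_b)%R).
rewrite (_ : (fun p => _) = fun p : R * R => \sum_(a < N) \sum_(b < N)
   (r`_a)`_b * (Complex p.1 p.2) ^+ a * ((Complex p.1 p.2)^*) ^+ b).
  apply: cc_sum => a; apply: cc_sum => b.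
  by apply: cc_mul; [apply: cc_mul; [apply: cc_cst | apply: cc_exp; apply: cc_z] |
                     apply: cc_exp; apply: cc_zc].
apply/funext => p; apply: hdiag_sum; first exact: leq_maxl.
exact: Nb_ok.
Qed.

End Cont.

Theorem corollary4p4 (R : realType) (r : {poly {poly R[i]}}) :
  herm_sym r ->
  (forall z : R[i], 0 < hdiag r z) ->
  (forall e : R, 0 < e -> exists z : R[i], hdiag r z < (e%:C)%C) ->
  ~ Qprime1 r.
Proof.
move=> _ rpos rinf [_ [_ [s [F [_ _ sn0 hid]]]]].
set Nr := maxn (size r) (\max_(b < size r) size (r`_b)%R).
set Ns := maxn (size s) (\max_(b < size s) size (s`_b)%R).
set N := maxn Nr Ns.
have hr1 : (size r <= N)%N by rewrite /N /Nr !leq_max leqnn.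
have hr2 : forall a : nat, leq (size r`_a) N.
  by move=> a; rewrite /N leq_max (@Nb_ok R r a).
have hs1 : (size s <= N)%N by rewrite /N /Ns !leq_max leqnn !orbT.
have hs2 : forall a : nat, leq (size s`_a) N.
  by move=> a; rewrite /N leq_max (@Nb_ok R s a) orbT.
case hn : (\max_(f <- F) size f) => [|n].
  have sq0 : forall z, sqnorm F z = 0.
    move=> z; rewrite /sqnorm big_seq big1 // => f fF.
    have : (size f <= 0)%N by rewrite -hn; apply: leq_bigmax_seq.
    by rewrite leqn0 size_poly_eq0 => /eqP ->; rewrite horner0 normr0 expr0n.
  have s0 : s = 0.
    apply: (@polar R s N hs1 hs2) => z; have := hid z; rewrite sq0 => /eqP.
    by rewrite mulf_eq0 (negbTE (lt0r_neq0 (rpos z))) => /eqP.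
  by move/eqP: sn0.
have hF : forall f, f \in F -> (size f <= n.+1)%N.
  by move=> f fF; rewrite -hn; apply: leq_bigmax_seq.
have cpos : 0 < \sum_(f <- F) `|f`_n| ^+ 2.
  have [f0 f0F sf0] := @max_attained R F (ltac:(by rewrite hn)).
  rewrite (big_rem f0) //=.
  apply: lt_le_trans (_ : `|f0`_n| ^+ 2 <= _); last first.
    by rewrite lerDl; apply: sumr_ge0 => f _; apply: exprn_ge0.
  rewrite exprn_gt0 // normr_gt0.
  have -> : n = (size f0).-1 by rewrite sf0 hn.
  rewrite -lead_coefE lead_coef_eq0 -size_poly_eq0 sf0 hn //.
have [m m0 [T T1 far]] := @far_field R r s F N n hr1 hr2 hs1 hs2 hid rpos hF cpos.
have T0 : 0 <= T := le_trans ler01 T1.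
have ReT : 0 <= complex.Re T by move: T0; rewrite lecE => /andP[_].
have [mu mu0 near] := @near_field R (hdiag r) (complex.Re T) ReT (@cc_hdiag R r) rpos.
have Rm0 : 0 < complex.Re m by move: m0; rewrite ltcE => /andP[_].
set d := Num.min mu (complex.Re m).
have d0 : 0 < d by rewrite lt_min mu0 Rm0.
have [z hz] := rinf d d0.
suff h : d%:C%C <= hdiag r z by move: (lt_le_trans hz h); rewrite ltxx.
case: (boolP (T <= `|z|)) => hT.
  apply: le_trans (far z hT); rewrite [X in _ <= X](@C_real R _ (ltW m0)) lecR.
  by rewrite ge_min lexx orbT.
have zT : `|z| <= (complex.Re T)%:C%C.
  rewrite -(@C_real R _ T0); apply: ltW.
  by rewrite real_ltNge ?normr_real ?ger0_real.
apply: le_trans (near z zT); rewrite lecR.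
by rewrite ge_min lexx.
Qed.
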